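(* Let $X, Y \subset \mathbb{Z}^n$ be finite nonempty sets, let $\kappa$ be an adjacency relation on $\mathbb{Z}^n$ (so that $(X,\kappa)$ and $(Y,\kappa)$ are digital images), and let $d$ be a metric on $\mathbb{Z}^n$. Then $H_d(X,Y) \le \delta_d(X,Y)$.
   Context: A digital image is a pair $(X,\kappa)$ with $X\subset\mathbb{Z}^n$ and $\kappa$ an adjacency (a symmetric irreflexive relation) on its points. A subset is $\kappa$-connected if any two of its points are joined by a finite sequence of points of the subset, consecutive ones $\kappa$-adjacent. A function $f:(X,\kappa)\to(Y,\lambda)$ is $(\kappa,\lambda)$-continuous if it maps $\kappa$-connected subsets to $\lambda$-connected subsets; equivalently, whenever $x,x'$ are $\kappa$-adjacent, $f(x)$ and $f(x')$ are equal or $\lambda$-adjacent. ''$\kappa$-continuous'' means $(\kappa,\kappa)$-continuous. For a metric $d$ and nonempty finite $A,B$, the Hausdorff metric is $H_d(A,B)=\min\{\varepsilon\ge 0 : \forall a\in A\ \exists b'\in B,\ d(a,b')\le\varepsilon, \text{ and } \forall b\in B\ \exists a'\in A,\ d(a',b)\le \varepsilon\}$. Borsuk's metric of continuity $\delta_d(X,Y)$ is the greatest lower bound of the numbers $t>0$ such that there exist $\kappa$-continuous maps $f:X\to Y$ and $g:Y\to X$ with $d(x,f(x))\le t$ for all $x\in X$ and $d(y,g(y))\le t$ for all $y\in Y$. *)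

(* Defs.v *)
From HB Require Import structures.
From mathcomp Require Import all_boot all_order all_algebra.
From mathcomp Require Import all_classical all_reals.
Set Implicit Arguments. Unset Strict Implicit. Unset Printing Implicit Defensive.
Import Order.TTheory GRing.Theory Num.Theory.
Local Open Scope classical_set_scope.
Local Open Scope ring_scope.

Definition zpoint (n : nat) := 'rV[int]_n.

Definition is_adjacency (T : Type) (k : T -> T -> bool) : Prop :=
  (forall x y, k x y = k y x) /\ (forall x, ~~ k x x).

Definition is_metric (R : realType) (T : Type) (d : T -> T -> R) : Prop :=
  [/\ forall x y, 0 <= d x y,
      forall x y, d x y = 0 <-> x = y,
      forall x y, d x y = d y x &
      forall x y z, d x z <= d x y + d y z].

(* (k,k)-continuity of f : X -> Y (f given as a total function on points that
   maps X into Y), in its adjacency form. *)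
Definition digitally_continuous (T : Type) (k : T -> T -> bool)
    (X Y : set T) (f : T -> T) : Prop :=
  (forall x, X x -> Y (f x)) /\
  (forall x x', X x -> X x' -> k x x' -> f x = f x' \/ k (f x) (f x')).

(* Hausdorff distance (the min of the admissible epsilons, taken as inf). *)
Definition hausdorff (R : realType) (T : Type) (d : T -> T -> R) (A B : set T) : R :=
  inf [set e : R | 0 <= e /\
        (forall a, A a -> exists2 b, B b & d a b <= e) /\
        (forall b, B b -> exists2 a, A a & d a b <= e)].

Definition borsuk_delta (R : realType) (T : Type) (k : T -> T -> bool)
    (d : T -> T -> R) (X Y : set T) : R :=
  inf [set t : R | 0 < t /\
        exists f g : T -> T,
          [/\ digitally_continuous k X Y f,
              digitally_continuous k Y X g,
              forall x, X x -> d x (f x) <= t &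
              forall y, Y y -> d y (g y) <= t]].

(* Main.v *)
Require Import Defs.
From HB Require Import structures.
From mathcomp Require Import all_boot all_order all_algebra.
From mathcomp Require Import all_classical all_reals.
From mathcomp Require Import finmap.
Import Order.TTheory GRing.Theory Num.Theory.
Local Open Scope classical_set_scope.
Local Open Scope ring_scope.

Lemma fin_bound (R : realType) (T : choiceType) (A : set T) (F : T -> R) :
  finite_set A -> exists M : R, forall a, A a -> F a <= M.
Proof.
move=> fA; exists (\big[Order.max/0]_(i <- fset_set A) F i) => a Aa.
apply: (@le_bigmax_seq _ _ _ _ _ a xpredT F) => //.
by rewrite in_fset_set //; apply/mem_set.
Qed.

Theorem proposition2p6 (R : realType) (n : nat)
    (k : zpoint n -> zpoint n -> bool) (d : zpoint n -> zpoint n -> R)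
    (X Y : set (zpoint n)) :
  is_adjacency k -> is_metric d ->
  finite_set X -> finite_set Y -> X !=set0 -> Y !=set0 ->
  hausdorff d X Y <= borsuk_delta k d X Y.
Proof.
move=> _ [d0 _ dsym _] fX fY [x0 Xx0] [y0 Yy0].
have [M1 HM1] := @fin_bound _ _ _ (fun x => d x y0) fX.
have [M2 HM2] := @fin_bound _ _ _ (fun y => d y x0) fY.
apply: lb_le_inf.
  have M10 : 0 <= M1 by apply: le_trans (HM1 _ Xx0); apply: d0.
  exists (1 + Num.max M1 M2); split.
    by apply: ltr_pwDl => //; rewrite le_max M10.
  exists (fun _ => y0), (fun _ => x0); split.
  - by split => // *; left.
  - by split => // *; left.
  - move=> x Xx; apply: le_trans (HM1 _ Xx) _.
    by apply: ler_wpDl => //; rewrite le_max lexx.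
  - move=> y Yy; apply: le_trans (HM2 _ Yy) _.
    by apply: ler_wpDl => //; rewrite le_max lexx orbT.
move=> t [t0 [f [g [[fXY _] [gYX _] Hf Hg]]]].
have Hl : has_lbound [set e : R | 0 <= e /\
        (forall a, X a -> exists2 b, Y b & d a b <= e) /\
        (forall b, Y b -> exists2 a, X a & d a b <= e)].
  by exists 0 => e [].
apply: (ge_inf Hl); split; first exact: ltW.
split.
  by move=> a Xa; exists (f a); [exact: fXY | exact: Hf].
by move=> b Yb; exists (g b); [exact: gYX | rewrite dsym; exact: Hg].
Qed.
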